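(* Let $Y$ be a dense subspace of a topological space $X$. If \textsc{Bob} has a winning strategy in $\mathsf{BM}_\mathrm{fin}(Y)$, then \textsc{Bob} has a winning strategy in $\mathsf{BM}_\mathrm{fin}(X)$.
   Context: The game $\mathsf{BM}_\mathrm{fin}(Z)$ on a space $Z$: \textsc{Alice} plays a non-empty open set $A_0$; \textsc{Bob} plays a finite collection $\mathcal{B}_0$ of non-empty open subsets of $A_0$; in inning $n+1$, for each $B \in \mathcal{B}_n$ \textsc{Alice} plays a non-empty open set $A_B \subseteq B$, letting $\mathcal{A}_{n+1}=\{A_B : B\in\mathcal{B}_n\}$, and \textsc{Bob} plays a finite collection $\mathcal{B}_{n+1}$ of non-empty open subsets of $\bigcup\mathcal{A}_{n+1}$; \textsc{Bob} wins if $\bigcap_{n}\bigcup\mathcal{B}_n\neq\emptyset$, otherwise \textsc{Alice} wins. *)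

(* Defs.v *)
From HB Require Import structures.
From mathcomp Require Import all_boot all_order all_algebra.
From mathcomp Require Import all_classical all_reals all_analysis.
Set Implicit Arguments. Unset Strict Implicit. Unset Printing Implicit Defensive.
Local Open Scope classical_set_scope.

(** Finite collections are encoded as lists
    [seq (set T)] (Bob is required to list pairwise distinct sets).
    To make the innings uniform we regard the start of the game as Bob
    having played the one-element collection [:: setT]; Alice's move in
    inning n is a function [a : nat -> set T], where [a i] is her answer
    A_B to the i-th set B of Bob's previous collection (values at indices
    >= size of that collection are irrelevant). *)

Definition bigU {T} (s : seq (set T)) : set T :=
  [set x | exists2 i, (i < size s)%N & nth set0 s i x].

(** A strategy of Bob: from the history of Alice's moves
    [a_0; ...; a_n] it returns Bob's collection B_n. *)
Definition bob_strategy (T : Type) := seq (nat -> set T) -> seq (set T).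

Section BMfin.
Context {T : topologicalType}.
Implicit Types (sigma : bob_strategy T) (alpha : nat -> nat -> set T).

Definition bob_move sigma alpha (n : nat) : seq (set T) :=
  sigma (mkseq alpha n.+1).

Definition prev_coll sigma alpha (n : nat) : seq (set T) :=
  if n is m.+1 then bob_move sigma alpha m else [:: setT].

Definition alice_legal sigma alpha (n : nat) : Prop :=
  forall i, (i < size (prev_coll sigma alpha n))%N ->
    [/\ open (alpha n i), alpha n i !=set0 &
        alpha n i `<=` nth set0 (prev_coll sigma alpha n) i].

Definition bob_legal sigma alpha (n : nat) : Prop :=
  let B := bob_move sigma alpha n in
  (forall i, (i < size B)%N ->
    [/\ open (nth set0 B i), nth set0 B i !=set0 &
        nth set0 B i `<=` bigU (mkseq (alpha n) (size (prev_coll sigma alpha n)))])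
  /\ (forall i j, (i < j)%N -> (j < size B)%N -> nth set0 B i <> nth set0 B j).

Definition bob_winning sigma : Prop :=
  forall alpha,
    (forall n, (forall m, (m <= n)%N -> alice_legal sigma alpha m) ->
               bob_legal sigma alpha n) /\
    ((forall n, alice_legal sigma alpha n) ->
       (\bigcap_n bigU (bob_move sigma alpha n)) !=set0).

End BMfin.

Definition BMfin_bob_wins (T : topologicalType) : Prop :=
  exists sigma : bob_strategy T, bob_winning sigma.

(* Main.v *)
Require Import Defs.
From HB Require Import structures.
From mathcomp Require Import all_boot all_order all_algebra.
From mathcomp Require Import all_classical all_reals all_analysis.
Local Open Scope classical_set_scope.

Local Notation bigU := Defs.bigU.

Section Proof.
Variables (X : topologicalType) (Y : set X).
Let S : topologicalType := set_type Y.
Let sv : S -> X := @set_val X Y.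

Lemma openS (V : set S) : open V <-> exists2 A, open A & sv @^-1` A = V.
Proof. split; by move=> [A oA <-]; exists A. Qed.

Definition trs (a : nat -> set X) : nat -> set S := fun i => sv @^-1` (a i).

Definition ext (V : set S) : set X :=
  \bigcup_(U in [set U | open U /\ sv @^-1` U `<=` V]) U.

Lemma ext_open V : open (ext V).
Proof. by apply: bigcup_open => U [] . Qed.

Lemma ext_sub V : sv @^-1` ext V `<=` V.
Proof. by move=> y [U [_ sU] Uy]; apply: sU. Qed.

Lemma ext_sup V : open V -> forall y, V y -> ext V (sv y).
Proof.
move=> /openS [A oA eA] y Vy; exists A.
  by split => //; rewrite eA.
by rewrite -eA in Vy.
Qed.

Lemma bigU_mkseq T (a : nat -> set T) k x :
  bigU (mkseq a k) x <-> exists2 j, (j < k)%N & a j x.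
Proof.
rewrite /bigU /= size_mkseq; split => -[j jk].
  by rewrite nth_mkseq // => ?; exists j.
by move=> ?; exists j; rewrite ?nth_mkseq.
Qed.

Lemma bigU_mkseq_open (a : nat -> set X) k :
  (forall j, (j < k)%N -> open (a j)) -> open (bigU (mkseq a k)).
Proof.
move=> oa.
have -> : bigU (mkseq a k) = \bigcup_(j in [set j | (j < k)%N]) a j.
  apply/seteqP; split => x.
    by move/bigU_mkseq => [j jk ajx]; exists j.
  by move=> [j jk ajx]; apply/bigU_mkseq; exists j.
by apply: bigcup_open => j; apply: oa.
Qed.

Variable sigma : bob_strategy S.

Definition psize (h : seq (nat -> set X)) : nat :=
  if (size h).-1 is m.+1 then size (sigma (map trs (take m.+1 h))) else 1%N.

Definition sigX : bob_strategy X := fun h =>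
  map (fun V => ext V `&` bigU (mkseq (nth (fun _ => setT) h (size h).-1) (psize h)))
      (sigma (map trs h)).

Variable alpha : nat -> nat -> set X.
Let beta : nat -> nat -> set S := fun n => trs (alpha n).

Lemma hist n : mkseq beta n = map trs (mkseq alpha n).
Proof. by rewrite /mkseq -map_comp. Qed.

Lemma take_mk T (f : nat -> T) m : take m.+1 (mkseq f m.+2) = mkseq f m.+1.
Proof. by rewrite /mkseq -map_take take_iota; congr map; congr iota; apply/minn_idPl; rewrite ltnW. Qed.

Definition gg n (V : set S) : set X :=
  ext V `&` bigU (mkseq (alpha n) (size (prev_coll sigma beta n))).

Lemma bmX n : bob_move sigX alpha n = map (gg n) (bob_move sigma beta n).
Proof.
rewrite /bob_move /sigX /gg -hist size_mkseq /= nth_mkseq //.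
congr map; apply: funext => V; congr (_ `&` bigU (mkseq _ _)).
rewrite /psize size_mkseq; case: n => [|m] //.
change (size (sigma (map trs (take m.+1 (mkseq alpha m.+2)))) = size (prev_coll sigma beta m.+1)).
by rewrite take_mk -hist.
Qed.

Lemma size_prev n : size (prev_coll sigX alpha n) = size (prev_coll sigma beta n).
Proof. by case: n => //= m; rewrite bmX size_map. Qed.

Hypothesis dY : dense Y.

Lemma aliceY n : alice_legal sigX alpha n -> alice_legal sigma beta n.
Proof.
move=> aL i; rewrite -size_prev => /[dup] ilt /aL [oA [x Ax] sA]; split.
- by apply/openS; exists (alpha n i).
- have [z [Az Yz]] := dY (alpha n i) (ex_intro _ x Ax) oA.
  by exists (exist _ z (mem_set Yz)).
- move: sA; clear oA Ax; case: n {aL} ilt => [|m] ilt sA y.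
    by rewrite /prev_coll; case: i ilt {sA} => [|[]].
  move=> /sA; rewrite /= bmX (nth_map set0); last by rewrite /= bmX size_map in ilt.
  by move=> [/ext_sub].
Qed.

Lemma key n (V : set S) : open V ->
  V `<=` bigU (mkseq (beta n) (size (prev_coll sigma beta n))) ->
  forall y, V y -> gg n V (sv y).
Proof.
move=> oV sV y Vy; split; first exact: ext_sup.
by have /bigU_mkseq [j jk bj] := sV _ Vy; apply/bigU_mkseq; exists j.
Qed.

Lemma bobX n : alice_legal sigX alpha n -> bob_legal sigma beta n ->
  bob_legal sigX alpha n.
Proof.
move=> aL [bL bD]; rewrite /bob_legal bmX size_map; split.
  move=> i ilt; rewrite (nth_map set0) //.
  have [oV [y Vy] sV] := bL i ilt; split.
  - apply: openI; first exact: ext_open.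
    apply: bigU_mkseq_open => j; rewrite -size_prev => /aL; by case.
  - by exists (sv y); apply: key.
  - by move=> x [_]; rewrite size_prev.
move=> i j ij jlt; rewrite !(nth_map set0) //; last exact: ltn_trans ij jlt.
move=> E; apply: (bD i j ij jlt).
have [oVi _ sVi] := bL i (ltn_trans ij jlt).
have [oVj _ sVj] := bL j jlt.
apply/seteqP; split => y Vy.
  by apply: ext_sub; have := @key n _ oVi sVi _ Vy; rewrite E => -[].
by apply: ext_sub; have := @key n _ oVj sVj _ Vy; rewrite -E => -[].
Qed.

End Proof.

Theorem lemma4p9 (X : topologicalType) (Y : set X) :
  dense Y -> BMfin_bob_wins (set_type Y) -> BMfin_bob_wins X.
Proof.
move=> dY [sigma win]; exists (@sigX _ _ sigma) => alpha.
have [wL wI] := win (fun n => @trs _ Y (alpha n)); split.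
  move=> n aL; apply: bobX; first exact: aL.
  by apply: wL => m mn; apply: aliceY => //; apply: aL.
move=> aL; have [y Hy] := wI (fun n => aliceY _ _ _ _ dY _ (aL n)).
exists (set_val y) => n _; have [i ilt Vy] := Hy n I.
have bl := wL n (fun m _ => aliceY _ _ _ _ dY _ (aL m)).
case: bl => bL _; have [oV _ sV] := bL i ilt.
exists i; first by rewrite bmX size_map.
by rewrite bmX (nth_map set0) //; apply: key.
Qed.
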